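(* The following bounds are sharp: for $d,j\in\mathbb{N}$ and $g\in\mathbb{C}[z]$ of degree $d$ with only isolated critical points, (1) the number of distinct critical points of $g$ of multiplicity $j$ is at most $\lfloor\frac{d-1}{j}\rfloor$, and (2) the number of distinct critical points of $g$ of multiplicity $j$ with a common critical value is at most $\lfloor\frac{d}{j+1}\rfloor$. That is, for all $d,j\in\mathbb{N}$ with $d>j$ there exists a polynomial of degree $d$ attaining the bound in (1), and there exists a polynomial of degree $d$ attaining the bound in (2).
   Context: A point $z_0\in\mathbb{C}$ is a critical point of multiplicity $j$ of $g\in\mathbb{C}[z]$ if $g^{(1)}(z_0)=\dots=g^{(j)}(z_0)=0$; $g(z_0)$ is its critical value. *)

(* Defs.v *)
From HB Require Import structures.
From mathcomp Require Import all_boot all_order all_algebra.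
From mathcomp Require Import complex.
From mathcomp Require Import reals.
Set Implicit Arguments. Unset Strict Implicit. Unset Printing Implicit Defensive.
Import Order.TTheory GRing.Theory Num.Theory.
Local Open Scope ring_scope.

Definition crit_mult (C : nzRingType) (g : {poly C}) (j : nat) (z0 : C) : Prop :=
  forall i : nat, (1 <= i <= j)%N -> (g^`(i)).[z0] = 0.

(* Main.v *)
Require Import Defs.
From HB Require Import structures.
From mathcomp Require Import all_boot all_order all_algebra.
From mathcomp Require Import complex.
From mathcomp Require Import reals.
From mathcomp Require Import zify.
Local Open Scope ring_scope.
Import GRing.Theory Num.Theory.

Section Aux.
Variable F : numClosedFieldType.

Lemma key_der (z : F) (i n : nat) (q : {poly F}) : (i <= n)%N ->
  exists q', (('X - z%:P) ^+ n * q)^`(i) = ('X - z%:P) ^+ (n - i) * q'.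
Proof.
elim: i n q => [|i IH] n q hin.
  by exists q; rewrite derivn0 subn0.
rewrite derivnS.
have [q' ->] : exists q', (('X - z%:P) ^+ n * q)^`(i) = ('X - z%:P) ^+ (n - i) * q'.
  by apply: IH; apply: ltnW.
have -> : (n - i = (n - i.+1).+1)%N by rewrite subnSK.
set k := (n - i.+1)%N.
exists ((k.+1)%:R *: q' + ('X - z%:P) * q'^`()).
rewrite derivM deriv_exp derivXsubC mul1r /=.
rewrite exprS -mulr_natr.
rewrite mulrDr -scalerAr.
rewrite -!mulrA; congr (_ + _); last by rewrite mulrCA.
by rewrite scaler_nat -mulrnAr mulr_natl.
Qed.

Lemma key_eval (z : F) (i n : nat) (q : {poly F}) : (i < n)%N ->
  ((('X - z%:P) ^+ n * q)^`(i)).[z] = 0.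
Proof.
move=> hin; have [q' ->] := key_der z _ _ q (ltnW hin).
rewrite hornerM horner_exp hornerXsubC subrr expr0n.
by rewrite subn_eq0 leqNgt hin mul0r.
Qed.

Definition integ (p : {poly F}) : {poly F} :=
  \poly_(i < (size p).+1) (if i is k.+1 then p`_k / (k.+1)%:R else 0).

Lemma integ_deriv p : (integ p)^`() = p.
Proof.
apply/polyP => i; rewrite coef_deriv coef_poly ltnS.
case: ltnP => h.
  by rewrite -[X in X = _]mulr_natr divfK // pnatr_eq0.
by rewrite nth_default //; apply: mul0rn.
Qed.

Lemma integ_size p : p != 0 -> size (integ p) = (size p).+1.
Proof.
move=> p0; rewrite /integ size_poly_eq //=.
have : lead_coef p != 0 by rewrite lead_coef_eq0.
rewrite lead_coefE.
case E: (size p) => [|k] /=; first by move: p0; rewrite -size_poly_eq0 E.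
by move=> h; rewrite mulf_neq0 // invr_eq0 pnatr_eq0.
Qed.

Definition pts (m : nat) : seq F := [seq (i%:R : F) | i <- iota 0 m].

Lemma pts_uniq m : uniq (pts m).
Proof.
rewrite /pts map_inj_uniq ?iota_uniq //.
by move=> a b /eqP; rewrite eqr_nat => /eqP.
Qed.

Lemma pts_size m : size (pts m) = m.
Proof. by rewrite /pts size_map size_iota. Qed.

Lemma pts0 m : (0 < m)%N -> (0 : F) \in pts m.
Proof.
case: m => // m _; rewrite /pts /= in_cons; apply/orP; left; by [].
Qed.

Definition Pol (m e r : nat) : {poly F} :=
  (\prod_(a <- pts m) ('X - a%:P)) ^+ e * 'X^r.

Lemma Pol_size m e r : size (Pol m e r) = (m * e + r).+1.
Proof.
rewrite /Pol size_mulXn; last first.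
  by rewrite expf_neq0 // -size_poly_eq0 size_prod_XsubC.
have h := size_exp (\prod_(a <- pts m) ('X - a%:P)) e.
rewrite size_prod_XsubC pts_size /= in h.
have nz : size ((\prod_(a <- pts m) ('X - a%:P)) ^+ e) != 0%N.
  by rewrite size_poly_eq0 expf_neq0 // -size_poly_eq0 size_prod_XsubC.
rewrite -[size _]prednK ?lt0n // h; lia.
Qed.

Lemma Pol_root m e r z : (0 < m)%N -> (Pol m e r).[z] = 0 -> z \in pts m.
Proof.
move=> m0; rewrite /Pol hornerM horner_exp hornerXn => /eqP.
rewrite mulf_eq0 !expf_eq0 => /orP [/andP [_ h]|/andP [_ /eqP ->]]; last exact: pts0.
by rewrite -root_prod_XsubC; exact: h.
Qed.

Lemma Pol_fact m e r z : z \in pts m ->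
  exists q, Pol m e r = ('X - z%:P) ^+ e * q.
Proof.
move=> zs; rewrite /Pol (big_rem z zs) /= exprMn.
by eexists; rewrite -mulrA.
Qed.

End Aux.
Arguments integ {F}.
Arguments Pol {F}.
Arguments pts {F}.

Theorem mainTheorem5 (R : realType) (d j : nat) :
  (0 < j)%N -> (j < d)%N ->
  (* (1) sharpness of floor((d-1)/j) *)
  (exists g : {poly R[i]}, size g = d.+1 /\
     exists s : seq R[i], [/\ uniq s, size s = ((d - 1) %/ j)%N &
       forall z : R[i], crit_mult g j z <-> z \in s])
  /\
  (* (2) sharpness of floor(d/(j+1)) *)
  (exists g : {poly R[i]}, size g = d.+1 /\
     exists (c : R[i]) (s : seq R[i]), [/\ uniq s, size s = (d %/ j.+1)%N &
       forall z : R[i], (crit_mult g j z /\ g.[z] = c) <-> z \in s]).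
Proof.
move=> j0 jd; split.
- set m := ((d - 1) %/ j)%N; set r := ((d - 1) %% j)%N.
  have m0 : (0 < m)%N by rewrite divn_gt0 //; lia.
  have hd : (m * j + r).+1 = d.
    by rewrite /m /r -divn_eq; lia.
  exists (integ (Pol (F:=R[i]) m j r)); split.
    rewrite integ_size ?Pol_size ?hd //.
    by rewrite -size_poly_eq0 Pol_size.
  exists (pts (F:=R[i]) m); split; [exact: pts_uniq | exact: pts_size |].
  move=> z; split.
  + move=> h; apply: (Pol_root _ m j r z m0).
    by have := h 1%N; rewrite j0 derivn1 integ_deriv => ->.
  + move=> zs i /andP [i1 ij].
    case: i i1 ij => // i _ ij.
    rewrite derivSn integ_deriv.
    have [q ->] := Pol_fact _ m j r z zs.
    exact: key_eval.
- set m := (d %/ j.+1)%N; set r := (d %% j.+1)%N.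
  have m0 : (0 < m)%N by rewrite divn_gt0 //.
  have hd : (m * j.+1 + r)%N = d by rewrite /m /r -divn_eq.
  exists (Pol (F:=R[i]) m j.+1 r); split; first by rewrite Pol_size hd.
  exists 0, (pts (F:=R[i]) m); split; [exact: pts_uniq | exact: pts_size |].
  move=> z; split.
  + by move=> [_ h]; exact: (Pol_root _ m j.+1 r z m0 h).
  + move=> zs; have [q ->] := Pol_fact _ m j.+1 r z zs; split.
      by move=> i /andP [_ ij]; apply: key_eval.
    by rewrite hornerM horner_exp hornerXsubC subrr expr0n mul0r.
Qed.
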